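(* Let $\mathcal G=(V,E,r)$ be a graph. (1) The monoid $\mathbf A(\mathcal G)$ is half-factorial if and only if $\mathcal G$ is acyclic. (2) The monoid $\mathbf A(\mathcal G)$ is factorial if and only if every connected component of $\mathcal G$ contains at most one edge.
   Context: A graph $\mathcal G=(V,E,r)$ consists of a finite vertex set $V$, a finite edge set $E$ disjoint from $V$, and a map $r$ assigning to each edge a two-element subset of $V$; multiple edges allowed, no loops. Acyclic means containing no cycle, where two edges with the same pair of endpoints form a cycle of length $2$. An agglomeration on $\mathcal G$ is a function $a\colon V\cup E\to\mathbb N_0$ with $a(v)\ge a(e)$ whenever $v$ is incident with $e$; $\mathbf A(\mathcal G)$ is the monoid of agglomerations under pointwise addition. A reduced atomic monoid is half-factorial if any two factorizations of an element into atoms have the same number of atoms, and factorial if every element factors uniquely into atoms up to order. *)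

(* Defs.v *)
From mathcomp Require Import all_boot.
Set Implicit Arguments. Unset Strict Implicit. Unset Printing Implicit Defensive.

(* A graph G = (V, E, r): finite vertex type V, finite edge type E (disjoint
   by construction), r assigns to each edge a two-element subset of V. *)
Definition is_graph (V E : finType) (r : E -> {set V}) : Prop :=
  forall e : E, #|r e| = 2.

Section Graphs.
Variables (V E : finType) (r : E -> {set V}).

(* A cycle of length k >= 2: distinct vertices v_0..v_{k-1}, distinct edges
   e_0..e_{k-1}, with r e_i = {v_i, v_{i+1 mod k}}.  For k = 2 this is a pair
   of parallel edges. *)
Definition has_cycle : Prop :=
  exists (k : nat) (vs : 'I_k -> V) (es : 'I_k -> E),
    [/\ 2 <= k, injective vs, injective es &
        forall i : 'I_k, r (es i) = [set vs i; vs (ordS i)]].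

Definition acyclic : Prop := ~ has_cycle.

Definition adj : rel V := fun u v => [exists e, r e == [set u; v]] && (u != v).

Definition components_at_most_one_edge : Prop :=
  forall (e1 e2 : E) (u1 u2 : V),
    u1 \in r e1 -> u2 \in r e2 -> connect adj u1 u2 -> e1 = e2.

Definition is_agg (a : {ffun V + E -> nat}) : Prop :=
  forall (e : E) (v : V), v \in r e -> a (inr e) <= a (inl v).

Definition agg_zero : {ffun V + E -> nat} := [ffun _ => 0].
Definition agg_add (a b : {ffun V + E -> nat}) : {ffun V + E -> nat} :=
  [ffun x => a x + b x].
Definition agg_sum (s : seq {ffun V + E -> nat}) : {ffun V + E -> nat} :=
  foldr agg_add agg_zero s.

Definition agg_atom (a : {ffun V + E -> nat}) : Prop :=
  [/\ is_agg a, a <> agg_zero &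
      forall b c, is_agg b -> is_agg c -> a = agg_add b c ->
                  b = agg_zero \/ c = agg_zero].

Definition agg_factorization (a : {ffun V + E -> nat})
    (s : seq {ffun V + E -> nat}) : Prop :=
  (forall x, x \in s -> agg_atom x) /\ agg_sum s = a.

Definition agg_half_factorial : Prop :=
  forall a s t, is_agg a -> agg_factorization a s -> agg_factorization a t ->
    size s = size t.

Definition agg_factorial : Prop :=
  forall a, is_agg a ->
    (exists s, agg_factorization a s) /\
    (forall s t, agg_factorization a s -> agg_factorization a t -> perm_eq s t).

End Graphs.

(* Main.v *)
Require Import Defs.
From mathcomp Require Import all_boot.
From Stdlib Require Import Classical.
From mathcomp Require Import zify.
Set Implicit Arguments. Unset Strict Implicit. Unset Printing Implicit Defensive.

Section S.
Variables (V E : finType) (r : E -> {set V}).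
Hypothesis G : is_graph r.
Local Notation agg := {ffun V + E -> nat}.
Local Notation az := (agg_zero V E).

Lemma agg_eqP (a b : agg) : (forall z, a z = b z) -> a = b.
Proof. by move=> h; apply/ffunP. Qed.

Lemma agg_sumE (s : seq agg) z : agg_sum s z = \sum_(y <- s) y z.
Proof.
elim: s => [|y s IH]; first by rewrite big_nil /agg_sum /= /agg_zero ffunE.
by rewrite big_cons /= /agg_add ffunE -IH.
Qed.

Lemma agg_sum_cat (s t : seq agg) : agg_sum (s ++ t) = agg_add (agg_sum s) (agg_sum t).
Proof. by apply: agg_eqP => z; rewrite /agg_add ffunE !agg_sumE big_cat. Qed.

Lemma is_agg_add (a b : agg) : is_agg r a -> is_agg r b -> is_agg r (agg_add a b).
Proof. move=> ha hb e v hv; rewrite !ffunE; exact: leq_add (ha _ _ hv) (hb _ _ hv). Qed.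

Lemma is_az : is_agg r az.
Proof. by move=> e v _; rewrite !ffunE. Qed.

Lemma is_agg_sum (s : seq agg) : (forall x, x \in s -> is_agg r x) -> is_agg r (agg_sum s).
Proof.
elim: s => [|y s IH] h /=; first exact: is_az.
apply: is_agg_add; first by apply: h; rewrite inE eqxx.
by apply: IH => x hx; apply: h; rewrite inE hx orbT.
Qed.

Lemma agg_nz (a : agg) : a <> az -> exists z, 0 < a z.
Proof.
move=> h; apply: NNPP => hn; apply: h; apply: agg_eqP => z; rewrite ffunE.
case: (posnP (a z)) => // hp; exfalso; apply: hn; by exists z.
Qed.

Definition splitp (x : agg) (P : pred (V + E)) : agg :=
  [ffun z => if P z then x z else 0].

Lemma splitp_add (x : agg) (P : pred (V + E)) : x = agg_add (splitp x P) (splitp x (predC P)).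
Proof. by apply: agg_eqP => z; rewrite !ffunE /=; case: (P z); rewrite ?addn0. Qed.

Lemma splitp_agg (x : agg) (P : pred (V + E)) : is_agg r x ->
  (forall e v, v \in r e -> 0 < x (inr e) -> P (inr e) -> P (inl v)) ->
  is_agg r (splitp x P).
Proof.
move=> hx hP e v hv; rewrite !ffunE.
case: (posnP (x (inr e))) => [->|hp]; first by case: ifP.
by case: ifP => // hPe; rewrite (hP _ _ hv hp hPe); apply: hx.
Qed.

Lemma atom_le1 (x : agg) : agg_atom r x -> forall z, x z <= 1.
Proof.
case=> hx hnz hat z; case: (leqP (x z) 1) => // h2.
pose b : agg := [ffun z => minn (x z) 1].
pose c : agg := [ffun z => x z - 1].
have hb : is_agg r b by move=> e v hv; rewrite !ffunE; have := hx _ _ hv; lia.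
have hc : is_agg r c by move=> e v hv; rewrite !ffunE; apply: leq_sub2r; apply: hx.
have hbc : x = agg_add b c by apply: agg_eqP => y; rewrite !ffunE; lia.
case: (hat _ _ hb hc hbc) => hz; have := congr1 (fun f : agg => f z) hz; rewrite /= !ffunE; lia.
Qed.


Definition Rx (x : agg) : rel (V + E) := fun z1 z2 =>
  match z1, z2 with
  | inr e, inl v => (v \in r e) && (x (inr e) == 1)
  | inl v, inr e => (v \in r e) && (x (inr e) == 1)
  | _, _ => false
  end.

Lemma atom_crit (x : agg) z0 :
  is_agg r x -> (forall z, x z <= 1) -> x z0 = 1 ->
  (forall z, x z = 1 -> connect (Rx x) z0 z) -> agg_atom r x.
Proof.
move=> hx h1 hz0 hcon; split => //.
  by move=> h; move: hz0; rewrite h ffunE.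
move=> b c hb hc hbc.
have hxz z : x z = b z + c z by rewrite hbc ffunE.
have stepb z1 z2 : Rx x z1 z2 -> b z1 = b z2 /\ c z1 = c z2.
  case: z1 z2 => [v|e] [w|f] //= /andP [hv /eqP he].
    have hxv : x (inl v) = 1 by have := hx _ _ hv; have := h1 (inl v); lia.
    have := hb _ _ hv; have := hc _ _ hv; have := hxz (inl v); have := hxz (inr f); lia.
  have hxv : x (inl w) = 1 by have := hx _ _ hv; have := h1 (inl w); lia.
  have := hb _ _ hv; have := hc _ _ hv; have := hxz (inl w); have := hxz (inr e); lia.
have connp p z1 : path (Rx x) z1 p -> b z1 = b (last z1 p) /\ c z1 = c (last z1 p).
  elim: p z1 => [|z2 p IH] z1 //= /andP [h01 hp].
  by have [e1 e2] := stepb _ _ h01; rewrite e1 e2; apply: IH.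
have conn z : x z = 1 -> b z0 = b z /\ c z0 = c z.
  by move=> /hcon /connectP [p hp ->]; apply: connp.
have zero (d : agg) : (forall z, d z <= x z) -> (forall z, x z = 1 -> d z = 0) -> d = az.
  move=> hle hd; apply: agg_eqP => z; rewrite ffunE; have := h1 z; have := hle z.
  case: (x z =P 1) => [/hd -> //|]; lia.
have := hxz z0; rewrite hz0 => h.
case: (posnP (b z0)) => hb0.
  left; apply: zero => [z|z /conn [<- _] //]; rewrite hxz; lia.
right; apply: zero => [z|z /conn [_ <-]]; first by rewrite hxz; lia.
lia.
Qed.

Definition single (v : V) : agg := [ffun z => (z == inl v) : nat].
Definition ea (e : E) : agg := [ffun z => match z with inl v => (v \in r e) : nat | inr f => (f == e) : nat end].

Lemma single_atom v : agg_atom r (single v).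
Proof.
apply: (@atom_crit _ (inl v)).
- by move=> e w _; rewrite !ffunE.
- by move=> z; rewrite ffunE; case: (_ == _).
- by rewrite ffunE eqxx.
- by move=> z; rewrite ffunE; case: eqP => // -> _; apply: connect0.
Qed.

Lemma ea_atom e : agg_atom r (ea e).
Proof.
apply: (@atom_crit _ (inr e)).
- by move=> f w hw; rewrite !ffunE; case: eqP => // hf; rewrite -hf hw.
- by move=> [w|f]; rewrite ffunE; [case: (w \in r e) | case: (f == e)].
- by rewrite ffunE eqxx.
- move=> [w|f]; rewrite ffunE.
    case hw: (w \in r e) => // _; apply: connect1 => /=; by rewrite hw ffunE eqxx.
  by case: eqP => // -> _; apply: connect0.
Qed.

Lemma single_inj : injective single.
Proof. move=> v w h; have := congr1 (fun f : agg => f (inl v)) h; rewrite /= !ffunE eqxx.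
by case: eqP => // [[->]]. Qed.

Lemma ea_inj : injective ea.
Proof. move=> e f h; have := congr1 (fun g : agg => g (inr e)) h; rewrite /= !ffunE eqxx.
by case: eqP. Qed.

Lemma single_ea v e : single v != ea e.
Proof. apply/eqP => h; have := congr1 (fun g : agg => g (inr e)) h; by rewrite /= !ffunE eqxx. Qed.


Definition wt (a : agg) := \sum_z a z.

Lemma wt_add a b : wt (agg_add a b) = wt a + wt b.
Proof. by rewrite /wt -big_split; apply: eq_bigr => z _; rewrite ffunE. Qed.

Lemma wt_pos (a : agg) : a <> az -> 0 < wt a.
Proof.
move=> /agg_nz [z hz]; rewrite /wt (bigD1 z) //=; lia.
Qed.

Lemma fact_exists (a : agg) : is_agg r a -> exists s, agg_factorization r a s.
Proof.
move: {2}(wt a).+1 (ltnSn (wt a)) => n; elim: n a => [//|n IH] a ha ha_agg.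
case: (classic (a = az)) => [->|hnz].
  by exists [::]; split.
case: (classic (exists b c, [/\ is_agg r b, is_agg r c, a = agg_add b c, b <> az & c <> az])).
  move=> [b [c [hb hc habc hb0 hc0]]].
  have hw := wt_add b c; rewrite -habc in hw.
  have := wt_pos hb0; have := wt_pos hc0 => p1 p2.
  have [s [hs1 hs2]] := IH b ltac:(lia) hb.
  have [t [ht1 ht2]] := IH c ltac:(lia) hc.
  exists (s ++ t); split.
    by move=> x; rewrite mem_cat => /orP [/hs1|/ht1].
  by rewrite agg_sum_cat hs2 ht2.
move=> hno; exists [:: a]; split.
  move=> x; rewrite inE => /eqP ->; split => // b c hb hc habc.
  apply: NNPP => hn; apply: hno; exists b, c; split => // hh; apply: hn; by [left|right].
by apply: agg_eqP => z; rewrite /= !ffunE addn0.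
Qed.


Lemma atom_class (x : agg) :
  (forall e1 e2 v, v \in r e1 -> v \in r e2 -> e1 = e2) ->
  agg_atom r x -> (exists e, x = ea e) \/ (exists v, x = single v).
Proof.
move=> H1 hat; have h1 := atom_le1 hat; case: hat => hx hnz hsplit.
case: (classic (exists e, 0 < x (inr e))) => [[e he]|hne].
  left; exists e.
  pose P : pred (V + E) := fun z => match z with inl v => v \in r e | inr f => f == e end.
  have hA : is_agg r (splitp x P).
    by apply: splitp_agg => // f v hv _ /= /eqP hf; rewrite -hf.
  have hB : is_agg r (splitp x (predC P)).
    apply: splitp_agg => // f v hv _ /= hf; apply/negP => hve; move/negP: hf; apply; apply/eqP; exact: H1 hv hve.
  have [hs|hs] := hsplit _ _ hA hB (splitp_add x P).
  - by have := congr1 (fun g : agg => g (inr e)) hs; rewrite /= !ffunE /= ?eqxx; lia.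
  - apply: agg_eqP => z; have := congr1 (fun g : agg => g z) hs; rewrite /= !ffunE.
    case: z => [v|f] /=.
      case hv: (v \in r e) => /=; last by [].
      by move=> _; have := hx _ _ hv; have := h1 (inl v); lia.
    case: eqP => [->|] /= _; last by [].
    by have := h1 (inr e); lia.
right; have [z hz] := agg_nz hnz.
case: z hz => [v|e] hv; last by exfalso; apply: hne; exists e.
exists v.
pose P : pred (V + E) := pred1 (inl v).
have hfe f : x (inr f) = 0 by case: (posnP (x (inr f))) => // hp; exfalso; apply: hne; exists f.
have hA : is_agg r (splitp x P) by apply: splitp_agg => // f w _; rewrite hfe.
have hB : is_agg r (splitp x (predC P)) by apply: splitp_agg => // f w _; rewrite hfe.
have [hs|hs] := hsplit _ _ hA hB (splitp_add x P).
- by have := congr1 (fun g : agg => g (inl v)) hs; rewrite /= !ffunE /P /= eqxx; lia.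
- apply: agg_eqP => z; have := congr1 (fun g : agg => g z) hs; rewrite /= !ffunE.
  case: z => [w|f] /=; last by rewrite hfe.
  rewrite /P /=; case: eqP => [->|] /= _; last by [].
  by have := h1 (inl v); lia.
Qed.


Lemma sum_eq_count (s : seq agg) c : \sum_(y <- s) (y == c : nat) = count_mem c s.
Proof. by elim: s => [|y s IH]; rewrite ?big_nil ?big_cons //= IH. Qed.

Lemma sum_pred1 (P : pred E) g : \sum_(f | P f) (g == f : nat) = P g.
Proof.
rewrite big_mkcond (bigD1 g) //= eqxx big1 ?addn0; first by case: (P g).
by move=> f /negPf hf; rewrite eq_sym hf; case: (P f).
Qed.

Lemma fact_unique (a : agg) (s t : seq agg) :
  (forall e1 e2 v, v \in r e1 -> v \in r e2 -> e1 = e2) ->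
  agg_factorization r a s -> agg_factorization r a t -> perm_eq s t.
Proof.
move=> H1.
have ke (u : seq agg) e : agg_factorization r a u -> a (inr e) = count_mem (ea e) u.
  case=> hu <-; rewrite agg_sumE -sum_eq_count big_seq_cond [RHS]big_seq_cond.
  apply: eq_bigr => y /andP [/hu hy _].
  case: (atom_class H1 hy) => [[f ->]|[w ->]]; rewrite ffunE.
    by rewrite (inj_eq ea_inj) eq_sym.
  by rewrite (negPf (single_ea _ _)).
have kv (u : seq agg) v : agg_factorization r a u ->
    a (inl v) = count_mem (single v) u + \sum_(f | v \in r f) count_mem (ea f) u.
  move=> [hu <-]; rewrite agg_sumE.
  transitivity (\sum_(y <- u) ((y == single v : nat) + \sum_(f | v \in r f) (y == ea f : nat))).
    rewrite big_seq_cond [RHS]big_seq_cond; apply: eq_bigr => y /andP [/hu hy _].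
    case: (atom_class H1 hy) => [[f ->]|[w ->]]; rewrite ffunE.
      rewrite eq_sym (negPf (single_ea _ _)) add0n.
      by under eq_bigr => g _ do rewrite (inj_eq ea_inj); rewrite sum_pred1.
    rewrite (inj_eq single_inj) big1 ?addn0.
      by case: eqP => [[->]|hn]; [rewrite eqxx| case: eqP => // hh; case: hn; rewrite hh].
    by move=> g _; rewrite (negPf (single_ea _ _)).
  rewrite big_split /= sum_eq_count; congr (_ + _).
  by rewrite exchange_big /=; apply: eq_bigr => f _; rewrite sum_eq_count.
move=> hs ht; apply/allP => x hx; apply/eqP.
have hxa : agg_atom r x by move: hx; rewrite mem_cat => /orP [/hs.1|/ht.1].
case: (atom_class H1 hxa) => [[e ->]|[v ->]].
  by rewrite -(ke _ _ hs) -(ke _ _ ht).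
have := kv _ v hs; rewrite (kv _ v ht).
have -> : \sum_(f | v \in r f) count_mem (ea f) s = \sum_(f | v \in r f) count_mem (ea f) t.
  by apply: eq_bigr => f _; rewrite -(ke _ _ hs) -(ke _ _ ht).
by move/addIn.
Qed.


Lemma two_elems e : exists u w, u != w /\ r e = [set u; w].
Proof. by apply/cards2P; rewrite G. Qed.

Lemma label_count (W : {set V}) (F : {set E}) :
  exists lab : V -> V,
    (forall e, e \in F -> forall p q, p \in r e -> q \in r e -> lab p = lab q) /\
    #|W| <= #|F| + #|lab @: W|.
Proof.
move: {2}#|F| (erefl #|F|) => n; elim: n F => [|n IH] F hF.
  exists id; split.
    by move=> e; move: hF => /eqP; rewrite cards_eq0 => /eqP ->; rewrite inE.
  by rewrite hF card_imset.
have [e he] : exists e, e \in F by apply/set0Pn; rewrite -cards_eq0 hF.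
have hF' : #|F :\ e| = n by move: hF; rewrite (cardsD1 e) he; case.
have [lab [hl hc]] := IH _ hF'.
have [u [w [huw hre]]] := two_elems e.
pose lab' v := if lab v == lab w then lab u else lab v.
exists lab'; split.
  move=> f hf p q hp hq; case: (eqVneq f e) => [hfe|hfe].
    rewrite hfe hre !inE in hp hq.
    by case/orP: hp => /eqP ->; case/orP: hq => /eqP ->; rewrite /lab' ?eqxx //; case: ifP.
  have hf' : f \in F :\ e by rewrite !inE hfe hf.
  by rewrite /lab' (hl _ hf' _ _ hp hq).
have hsub : (lab @: W) :\ lab w \subset lab' @: W.
  apply/subsetP => l; rewrite !inE => /andP [hl1 /imsetP [v hv hlv]]; subst l.
  apply/imsetP; exists v => //; by rewrite /lab' (negPf hl1).
have := subset_leq_card hsub; have := cardsD1 (lab w) (lab @: W).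
rewrite (cardsD1 e F) he; case: (lab w \in _) => /=; lia.
Qed.


Definition Wx (x : agg) : {set V} := [set v | 0 < x (inl v)].
Definition Fx (x : agg) : {set E} := [set e | 0 < x (inr e)].

Lemma atom_card_upper (x : agg) : agg_atom r x -> #|Wx x| <= #|Fx x| + 1.
Proof.
move=> hat; case: (hat) => hx hnz hsplit.
have [lab [hl hc]] := label_count (Wx x) (Fx x).
suff : #|lab @: Wx x| <= 1 by lia.
rewrite leqNgt; apply/negP => h2.
have [l1 hl1] : exists l1, l1 \in lab @: Wx x.
  by apply/set0Pn; rewrite -cards_eq0; lia.
have [l2 hl2] : exists l2, l2 \in (lab @: Wx x) :\ l1.
  by apply/set0Pn; rewrite -cards_eq0; have := cardsD1 l1 (lab @: Wx x); rewrite hl1; lia.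
move: hl2; rewrite !inE => /andP [hne /imsetP [v2 hv2 e2]].
move: hl1 => /imsetP [v1 hv1 e1]; subst l1 l2.
pose P : pred (V + E) := fun z => match z with
  | inl v => lab v == lab v1 | inr e => [exists v in r e, lab v == lab v1] end.
have hA : is_agg r (splitp x P).
  apply: splitp_agg => // e v hv he /= /existsP [v' /andP [hv' /eqP <-]].
  by apply/eqP; apply: (hl e) => //; rewrite inE.
have hB : is_agg r (splitp x (predC P)).
  apply: splitp_agg => // e v hv he /=; apply: contra => hvv.
  by apply/existsP; exists v; rewrite hv.
have [hs|hs] := hsplit _ _ hA hB (splitp_add x P).
  have := congr1 (fun g : agg => g (inl v1)) hs; rewrite /= !ffunE /= eqxx.
  by move: hv1; rewrite inE; lia.
have := congr1 (fun g : agg => g (inl v2)) hs; rewrite /= !ffunE /= hne.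
by move: hv2; rewrite inE; lia.
Qed.


Lemma set2_eq (A : {set V}) a b : #|A| = 2 -> a \in A -> b \in A -> a != b -> A = [set a; b].
Proof.
move=> hA ha hb hab; apply/eqP; rewrite eq_sym eqEcard cards2 hab hA andbT.
by apply/subsetP => z; rewrite !inE => /orP [] /eqP ->.
Qed.

Definition adjF (F : {set E}) : rel V := fun p q =>
  [exists f, [&& f \in F, p \in r f & q \in r f]] && (p != q).

Lemma val_ordS k (i : 'I_k) : val (ordS i) = i.+1 %% k.
Proof. by []. Qed.

Lemma path_cycle (F : {set E}) e u w :
  r e = [set u; w] -> u != w -> e \notin F -> connect (adjF F) u w -> has_cycle r.
Proof.
move=> hre huw heF /connectP [p0 hp0 hw]; move: hw.
case: (shortenP hp0) => p hp huniq _ hw.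
set m := size p.
have hm : 0 < m by rewrite /m; case: (p) hw huw => [|//] /= hw; rewrite hw eqxx.
set a := fun i => nth u (u :: p) i.
have hsz : size (u :: p) = m.+1 by [].
have ainj i j : i <= m -> j <= m -> a i = a j -> i = j.
  by move=> hi hj /eqP; rewrite /a nth_uniq // => /eqP.
have hadj i : i < m -> adjF F (a i) (a i.+1) by move=> hi; exact: (pathP u hp i hi).
pose ef i := if i < m then odflt e [pick f | [&& f \in F, a i \in r f & a i.+1 \in r f]] else e.
have hef i : i < m -> ef i \in F /\ r (ef i) = [set a i; a i.+1].
  move=> hi; rewrite /ef hi; have /andP [/existsP [f hf] hne] := hadj i hi.
  case: pickP => [g /and3P [hg h1 h2]|/(_ f)]; last by rewrite hf.
  split => //=; apply: set2_eq => //; exact: G.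
have hefm : ef m = e by rewrite /ef ltnn.
have ham : a m = w by rewrite hw /a /m -[size p]/((size (u :: p)).-1) nth_last.
exists m.+1, (fun i : 'I_m.+1 => a i), (fun i : 'I_m.+1 => ef i); split.
- by [].
- by move=> i j /ainj h; apply: val_inj; apply: h; rewrite -ltnS.
- move=> i j hij; apply: val_inj; change (nat_of_ord i = nat_of_ord j).
  have hi := ltn_ord i; have hj := ltn_ord j.
  have hF k : k < m -> ef k != e.
    by move=> hk; apply/eqP => hk2; have [hh _] := hef _ hk; move: hh; rewrite hk2 (negPf heF).
  case: (ltnP i m) => him; case: (ltnP j m) => hjm.
  + have [_ ri] := hef _ him; have [_ rj] := hef _ hjm.
    have h1 : a i \in r (ef j) by rewrite -hij ri !inE eqxx.
    have h2 : a i.+1 \in r (ef j) by rewrite -hij ri !inE eqxx orbT.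
    rewrite rj !inE in h1 h2.
    case/orP: h1 => /eqP h1; case/orP: h2 => /eqP h2.
    * by have := ainj i j ltac:(lia) ltac:(lia) h1.
    * by have := ainj i j ltac:(lia) ltac:(lia) h1.
    * have := ainj i j.+1 ltac:(lia) ltac:(lia) h1; have := ainj i.+1 j ltac:(lia) ltac:(lia) h2; lia.
    * by have := ainj i.+1 j.+1 ltac:(lia) ltac:(lia) h2; lia.
  + have ejm : nat_of_ord j = m by lia.
    by move: (hF _ him); rewrite hij ejm hefm eqxx.
  + have eim : nat_of_ord i = m by lia.
    by move: (hF _ hjm); rewrite -hij eim hefm eqxx.
  + lia.
- move=> i; have -> : nat_of_ord (ordS i) = i.+1 %% m.+1 by [].
  have hi := ltn_ord i.
  case: (ltngtP i m) => him.
  + by rewrite modn_small // (hef _ him).2.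
  + by exfalso; move: hi; rewrite ltnS leqNgt him.
  + by rewrite him modnn hefm hre ham setUC.
Qed.


Lemma forest_count : acyclic r -> forall (W : {set V}) (F : {set E}),
  (forall e, e \in F -> r e \subset W) -> W != set0 -> #|F| < #|W|.
Proof.
move=> hac W F; move: {2}#|F|.+1 (ltnSn #|F|) => n; elim: n W F => [//|n IH] W F hn hcl hW.
case: (set_0Vmem F) => [->|[e he]].
  by rewrite cards0 card_gt0.
set F' := F :\ e.
have hF : #|F| = #|F'|.+1 by rewrite (cardsD1 e F) he.
have [u [w [huw hre]]] := two_elems e.
have hu : u \in W by apply: (subsetP (hcl _ he)); rewrite hre !inE eqxx.
have hw : w \in W by apply: (subsetP (hcl _ he)); rewrite hre !inE eqxx orbT.
set Sc := [set v | connect (adjF F') u v].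
set S := W :&: Sc.
set T := W :\: Sc.
set FS := [set f in F' | r f \subset S].
set FT := [set f in F' | r f \subset T].
have hWST : #|S| + #|T| = #|W| by apply: cardsID.
have huS : u \in S by rewrite !inE hu connect0.
have hwT : w \in T.
  rewrite !inE hw andbT; apply/negP => hc.
  apply: hac; apply: (path_cycle hre huw _ hc); by rewrite !inE eqxx.
have hcov : F' \subset FS :|: FT.
  apply/subsetP => f hf; have [p [q [hpq hrf]]] := two_elems f.
  have hfF : f \in F by move: hf; rewrite !inE => /andP [].
  have hpW : p \in W by apply: (subsetP (hcl _ hfF)); rewrite hrf !inE eqxx.
  have hqW : q \in W by apply: (subsetP (hcl _ hfF)); rewrite hrf !inE eqxx orbT.
  have apq : adjF F' p q.
    rewrite /adjF hpq andbT; apply/existsP; exists f; apply/and3P; split => //; by rewrite hrf !inE eqxx ?orbT.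
  have aqp : adjF F' q p.
    rewrite /adjF eq_sym hpq andbT; apply/existsP; exists f; apply/and3P; split => //; by rewrite hrf !inE eqxx ?orbT.
  have eqc : (p \in Sc) = (q \in Sc).
    rewrite !inE; apply/idP/idP => h; apply: connect_trans h _; exact: connect1.
  have /setD1P [hfe hfF2] := hf.
  rewrite in_setU /FS /FT !inE hfe hfF2 /=; case hp: (p \in Sc).
    apply/orP; left; apply/subsetP => z; rewrite hrf => /set2P [] ->;
      by rewrite /S in_setI ?hpW ?hqW ?hp -?eqc ?hp.
  apply/orP; right; apply/subsetP => z; rewrite hrf => /set2P [] ->;
    by rewrite /T in_setD ?hpW ?hqW ?hp -?eqc ?hp.
have hFS : #|FS| <= #|F'| by apply: subset_leq_card; apply/subsetP => f; rewrite inE => /andP [].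
have hFT : #|FT| <= #|F'| by apply: subset_leq_card; apply/subsetP => f; rewrite inE => /andP [].
have h1 : #|FS| < #|S|.
  apply: IH; first by lia.
    by move=> f; rewrite inE => /andP [].
  by apply/set0Pn; exists u.
have h2 : #|FT| < #|T|.
  apply: IH; first by lia.
    by move=> f; rewrite inE => /andP [].
  by apply/set0Pn; exists w.
have := subset_leq_card hcov; have := (leq_card_setU FS FT).1.
lia.
Qed.


Definition sumV (x : agg) := \sum_v x (inl v).
Definition sumE (x : agg) := \sum_e x (inr e).

Lemma sum01 (T : finType) (f : T -> nat) : (forall t, f t <= 1) ->
  \sum_t f t = #|[set t | 0 < f t]|.
Proof.
move=> h; rewrite -sum1_card [RHS]big_mkcond /=; apply: eq_bigr => t _.
by rewrite inE; have := h t; case: (f t) => [|[|]].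
Qed.

Lemma atom_sums (x : agg) : acyclic r -> agg_atom r x -> sumV x = sumE x + 1.
Proof.
move=> hac hat; have h1 := atom_le1 hat.
have hup := atom_card_upper hat.
have hlow : #|Fx x| < #|Wx x|.
  case: hat => hx hnz _.
  apply: forest_count => //.
    move=> e; rewrite inE => he; apply/subsetP => v hv; rewrite inE.
    exact: leq_trans he (hx _ _ hv).
  have [[v|e] hz] := agg_nz hnz.
    by apply/set0Pn; exists v; rewrite inE.
  have [u [w [_ hre]]] := two_elems e.
  apply/set0Pn; exists u; rewrite inE; apply: leq_trans hz (hx _ _ _).
  by rewrite hre !inE eqxx.
rewrite /sumV /sumE (@sum01 _ (fun v => x (inl v))) ?(@sum01 _ (fun e => x (inr e))) //.
rewrite -/(Wx x) -/(Fx x); lia.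
Qed.

Lemma fact_sums (s : seq agg) : (forall y, y \in s -> sumV y = sumE y + 1) ->
  sumV (agg_sum s) = sumE (agg_sum s) + size s.
Proof.
elim: s => [|y s IH] h.
  by rewrite /sumV /sumE /= !big1 // => z _; rewrite ffunE.
have hy : sumV y = sumE y + 1 by apply: h; rewrite inE eqxx.
have hs : sumV (agg_sum s) = sumE (agg_sum s) + size s.
  by apply: IH => z hz; apply: h; rewrite inE hz orbT.
have eV : sumV (agg_sum (y :: s)) = sumV y + sumV (agg_sum s).
  by rewrite /sumV -big_split; apply: eq_bigr => z _ /=; rewrite ffunE.
have eE : sumE (agg_sum (y :: s)) = sumE y + sumE (agg_sum s).
  by rewrite /sumE -big_split; apply: eq_bigr => z _ /=; rewrite ffunE.
rewrite eV eE hy hs /=; lia.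
Qed.

Lemma acyclic_hf : acyclic r -> agg_half_factorial r.
Proof.
move=> hac a s t _ [hs <-] [ht ht2].
have := fact_sums (s := s) (fun y hy => atom_sums hac (hs _ hy)).
rewrite -ht2 fact_sums; last by move=> y hy; apply: atom_sums hac (ht _ hy).
by move/addnI.
Qed.


Lemma sum_inj_ind (T U : finType) (g : T -> U) y : injective g ->
  \sum_i (g i == y : nat) = [exists i, g i == y].
Proof.
move=> hg; case: existsP => [[j /eqP <-]|hn].
  rewrite (bigD1 j) //= eqxx big1 // => i hij; rewrite (inj_eq hg).
  by rewrite (negPf hij).
by rewrite big1 // => i _; case: eqP => // h; exfalso; apply: hn; exists i; apply/eqP.
Qed.

Lemma ordS_neq k (i : 'I_k) : 2 <= k -> ordS i != i.
Proof.
move=> hk; apply/eqP => /(congr1 val); rewrite /= => h.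
have hi := ltn_ord i.
case: (ltngtP i.+1 k) => hik.
- by move: h; rewrite modn_small //; lia.
- lia.
- have : i.+1 %% k = 0 by rewrite hik modnn.
  lia.
Qed.

Lemma sum_inT k (F : 'I_k -> nat) : \sum_(i in 'I_k) F i = \sum_i F i.
Proof. by apply: eq_bigl. Qed.

Lemma cycle_not_hf : has_cycle r -> ~ agg_half_factorial r.
Proof.
move=> [k [vs [es [hk hvs hes hr]]]] hhf.
have h0 : 0 < k by lia.
pose i0 : 'I_k := Ordinal h0.
pose cyc : agg := [ffun z => match z with
   | inl v => [exists i, vs i == v] : nat | inr f => [exists i, es i == f] : nat end].
pose s := cyc :: [seq single (vs i) | i <- enum 'I_k].
pose t := [seq ea (es i) | i <- enum 'I_k].
have hcyc_agg : is_agg r cyc.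
  move=> e v hv; rewrite !ffunE; case: existsP => // [[i /eqP hi]].
  move: hv; rewrite -hi hr => /set2P [] ->; case: existsP => // hn; exfalso; apply: hn;
    by [exists i | exists (ordS i)].
have step i : connect (Rx cyc) (inl (vs i)) (inl (vs (ordS i))).
  apply: connect_trans (connect1 (y := inr (es i)) _) (connect1 _) => /=.
    rewrite hr !inE eqxx /= ffunE; case: existsP => // hn; exfalso; apply: hn; by exists i.
  rewrite hr !inE eqxx orbT /= ffunE; case: existsP => // hn; exfalso; apply: hn; by exists i.
have call i : connect (Rx cyc) (inl (vs i0)) (inl (vs i)).
  case: i => n; elim: n => [|n IH] hn.
    by rewrite (_ : Ordinal hn = i0) ?connect0 //; apply: val_inj.
  have hn' : n < k by lia.
  apply: connect_trans (IH hn') _.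
  rewrite (_ : Ordinal hn = ordS (Ordinal hn')); first exact: step.
  by apply: val_inj; rewrite /= modn_small.
have hcyc : agg_atom r cyc.
  apply: (@atom_crit _ (inl (vs i0))) => //.
  - by move=> [v|f]; rewrite ffunE; case: existsP.
  - by rewrite ffunE; case: existsP => // hn; exfalso; apply: hn; exists i0.
  - move=> [v|f]; rewrite ffunE; case: existsP => // [[i /eqP <-]] _ //.
    apply: connect_trans (call i) (connect1 _) => /=.
    rewrite hr !inE eqxx /= ffunE; case: existsP => // hn; exfalso; apply: hn; by exists i.
have ht_at : forall x, x \in t -> agg_atom r x.
  by move=> x /mapP [i _ ->]; apply: ea_atom.
have hs_at : forall x, x \in s -> agg_atom r x.
  move=> x; rewrite inE => /orP [/eqP -> //|/mapP [i _ ->]]; exact: single_atom.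
have hta : is_agg r (agg_sum t).
  by apply: is_agg_sum => x /ht_at; case.
have hst : agg_sum s = agg_sum t.
  apply: agg_eqP => z; rewrite !agg_sumE big_cons !big_map -!enumT !big_enum /= !sum_inT.
  case: z => [v|f].
    under eq_bigr => i _ do rewrite ffunE.
    under [in RHS]eq_bigr => i _ do rewrite ffunE hr in_set2.
    rewrite ffunE.
    transitivity (\sum_i (vs i == v : nat) + \sum_i (vs i == v : nat)).
      rewrite sum_inj_ind //; congr (_ + _); rewrite -sum_inj_ind //; apply: eq_bigr => i _.
      by case: (inl v =P inl (vs i)) => [[->]|hne]; rewrite ?eqxx //; case: eqP => // hh; case: hne; rewrite hh.
    rewrite {2}(reindex_inj (@ordS_inj k)) -big_split /=; apply: eq_bigr => i _.
    have hne : vs i != vs (ordS i) by rewrite (inj_eq hvs) eq_sym ordS_neq.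
    rewrite ![v == _]eq_sym.
    by case: (vs i =P v) => [hv|_]; case: (vs (ordS i) =P v) => [hv'|_] //; move: hne; rewrite hv hv' eqxx.
  under eq_bigr => i _ do rewrite ffunE.
  under [in RHS]eq_bigr => i _ do rewrite ffunE.
  rewrite ffunE big1 ?addn0 // -sum_inj_ind //.
  by apply: eq_bigr => i _; rewrite eq_sym.
have := hhf (agg_sum t) s t hta (conj hs_at hst) (conj ht_at erefl).
by rewrite /s /t /= !size_map -enumT size_enum_ord; lia.
Qed.


Lemma cycle2 f1 f2 p q : f1 != f2 -> p != q ->
  r f1 = [set p; q] -> r f2 = [set p; q] -> has_cycle r.
Proof.
move=> hf hpq h1 h2.
exists 2, (fun i : 'I_2 => if val i == 0 then p else q),
  (fun i : 'I_2 => if val i == 0 then f1 else f2); split => //.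
- move=> [[|[|//]] hi] [[|[|//]] hj] //= h; try (by apply: val_inj);
    by move: hpq; rewrite h eqxx.
- move=> [[|[|//]] hi] [[|[|//]] hj] //= h; try (by apply: val_inj);
    by move: hf; rewrite h eqxx.
- move=> [[|[|//]] hi] /=; first by rewrite h1.
  by rewrite h2 setUC.
Qed.

Lemma adjacent_edges e1 e2 u1 u2 : e1 != e2 -> u1 \in r e1 -> u2 \in r e2 ->
  connect (adj r) u1 u2 ->
  exists f1 f2 v, [/\ f1 != f2, v \in r f1 & v \in r f2].
Proof.
move=> hne h1 h2 /connectP [p hp hl].
elim: p u1 e1 hne h1 hp hl => [|q p IH] u1 e1 hne h1 /=.
  by move=> _ hu; exists e1, e2, u1; split => //; rewrite -hu.
move=> /andP [/andP [/existsP [f /eqP hf] hneq] hp] hl.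
case: (eqVneq f e1) => [hfe|hfe].
  apply: (IH q e1 hne _ hp hl); by rewrite -hfe hf !inE eqxx orbT.
exists e1, f, u1; split => //; first by rewrite eq_sym.
by rewrite hf !inE eqxx.
Qed.

Definition yy (f1 f2 : E) : agg := [ffun z => match z with
  | inl p => ((p \in r f1) || (p \in r f2)) : nat
  | inr f => ((f == f1) || (f == f2)) : nat end].

Lemma yy_atom f1 f2 v : v \in r f1 -> v \in r f2 -> agg_atom r (yy f1 f2).
Proof.
move=> h1 h2.
have c1 : Rx (yy f1 f2) (inl v) (inr f1) by rewrite /= h1 ffunE eqxx.
have c2 : Rx (yy f1 f2) (inl v) (inr f2) by rewrite /= h2 ffunE eqxx orbT.
apply: (@atom_crit _ (inl v)).
- move=> f w hw; rewrite !ffunE; case: (f =P f1) => [hf|_]; first by subst f; rewrite hw.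
  by case: (f =P f2) => [hf|_] //; subst f; rewrite hw !orbT.
- by move=> [w|f]; rewrite ffunE; [case: (_ || _) | case: (_ || _)].
- by rewrite ffunE h1.
- move=> [w|f]; rewrite ffunE.
    case hw1: (w \in r f1) => /=.
      move=> _; apply: connect_trans (connect1 c1) (connect1 _); by rewrite /= hw1 ffunE eqxx.
    case hw2: (w \in r f2) => // _.
    apply: connect_trans (connect1 c2) (connect1 _); by rewrite /= hw2 ffunE eqxx orbT.
  case: (f =P f1) => [-> _|_]; first exact: connect1.
  by case: (f =P f2) => [-> _|_] //; exact: connect1.
Qed.

Lemma fact_hf : agg_factorial r -> agg_half_factorial r.
Proof.
move=> hf a s t ha hs ht; have [_ hu] := hf a ha; exact: perm_size (hu _ _ hs ht).
Qed.

Lemma fact_comp : agg_factorial r -> components_at_most_one_edge r.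
Proof.
move=> hf.
have hac : acyclic r by move=> hc; exact: (cycle_not_hf hc (fact_hf hf)).
move=> e1 e2 u1 u2 h1 h2 hc; case: (eqVneq e1 e2) => // hne; exfalso.
have [f1 [f2 [v [hf12 hv1 hv2]]]] := adjacent_edges hne h1 h2 hc.
have hone p : p != v -> p \in r f1 -> p \in r f2 -> False.
  move=> hpv hp1 hp2; apply: hac; apply: (cycle2 (p := v) (q := p) hf12).
  - by rewrite eq_sym.
  - by apply: set2_eq; rewrite ?G // eq_sym.
  - by apply: set2_eq; rewrite ?G // eq_sym.
have ha := is_agg_sum (s := [:: ea f1; ea f2]).
have hs : agg_factorization r (agg_sum [:: ea f1; ea f2]) [:: ea f1; ea f2].
  by split => // x; rewrite !inE => /orP [] /eqP ->; apply: ea_atom.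
have ht : agg_factorization r (agg_sum [:: ea f1; ea f2]) [:: yy f1 f2; single v].
  split.
    by move=> x; rewrite !inE => /orP [] /eqP ->; [apply: (yy_atom hv1 hv2)| apply: single_atom].
  apply: agg_eqP => -[p|g]; rewrite /= !ffunE.
    case: (p =P v) => [->|hpv]; first by rewrite eqxx hv1 hv2.
    have -> : (inl p == inl v :> V + E) = false by apply/eqP => -[].
    case hp1: (p \in r f1); case hp2: (p \in r f2) => //=.
    by exfalso; apply: (hone p) => //; apply/eqP.
  case: (g =P f1) => [->|_]; first by rewrite (negPf hf12).
  by case: (g =P f2).
have ha' : is_agg r (agg_sum [:: ea f1; ea f2]).
  by apply: ha => x; rewrite !inE => /orP [] /eqP ->; case: (ea_atom f1); case: (ea_atom f2).
have [_ hu] := hf _ ha'.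
have := perm_mem (hu _ _ hs ht) (ea f1); rewrite !inE eqxx /=.
case/esym/orP => /eqP hx.
  by have := congr1 (fun g : agg => g (inr f2)) hx; rewrite /= !ffunE eqxx orbT eq_sym (negPf hf12).
by have := congr1 (fun g : agg => g (inr f1)) hx; rewrite /= !ffunE eqxx.
Qed.

End S.

Theorem theorem4p20 (V E : finType) (r : E -> {set V}) :
  is_graph r ->
  (agg_half_factorial r <-> acyclic r) /\
  (agg_factorial r <-> components_at_most_one_edge r).
Proof.
move=> G; split; split.
- by move=> h hc; exact: (cycle_not_hf hc h).
- exact: acyclic_hf.
- exact: fact_comp.
- move=> hc a ha; split; first exact: fact_exists.
  move=> s t; apply: fact_unique => e1 e2 v hv1 hv2.
  exact: (hc e1 e2 v v hv1 hv2 (connect0 _ _)).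
Qed.
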